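(* Let $K,L\subset\mathbb{R}^n$ be nonempty compact sets with connected boundaries $\partial K$, $\partial L$, and with $K\cap L\ne\emptyset$. If neither $L$ is strictly contained in $K$ nor $K$ is strictly contained in $L$, then there exists $z\in\partial K\cap\partial L$.
   Context: ''Strictly contained'' means contained and not equal. *)

(* Defs.v *)
From HB Require Import structures.
From mathcomp Require Import all_boot all_order all_algebra.
From mathcomp Require Import all_classical all_reals all_analysis.
Set Implicit Arguments. Unset Strict Implicit. Unset Printing Implicit Defensive.
Import Order.TTheory GRing.Theory Num.Theory.
Import numFieldNormedType.Exports.
Local Open Scope classical_set_scope.

Definition boundary {T : topologicalType} (A : set T) : set T :=
  closure A `\` interior A.

(* Main.v *)
Require Import Defs.
From HB Require Import structures.
From mathcomp Require Import all_boot all_order all_algebra.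
From mathcomp Require Import all_classical all_reals all_analysis.
From mathcomp Require Import lra.
Import Order.TTheory GRing.Theory Num.Theory.
Import numFieldNormedType.Exports.
Local Open Scope classical_set_scope.
Local Open Scope ring_scope.

Set Implicit Arguments.
Section S.
Variables (R : realType) (n : nat) (hn : (0 < n)%N).
Local Notation T := 'rV[R]_n.

Lemma not_full (A : set T) : compact A -> exists b, ~ A b.
Proof.
move=> /compact_bounded[M [_ HM]].
pose e : T := const_mx 1.
have e0 : e != 0.
  apply/eqP => /matrixP /(_ ord0 (Ordinal hn)); rewrite !mxE => /eqP.
  by rewrite oner_eq0.
have ne : 0 < `|e| by rewrite normr_gt0.
pose c := (`|M| + 2) / `|e|.
have Hlt : M < `|M| + 1 by rewrite (le_lt_trans (ler_norm M)) // ltrDl.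
exists (c *: e) => Ab.
have /= := HM _ Hlt _ Ab.
rewrite normrZ /c ger0_norm; last by rewrite divr_ge0 // ?addr_ge0 // ltW.
rewrite mulfVK ?gt_eqF //.
by rewrite lerD2l; lra.
Qed.

Lemma sep_open (U V : set T) : open U -> open V -> U `&` V = set0 -> separated U V.
Proof.
move=> oU oV UV.
have cl : forall A B : set T, open B -> A `&` B = set0 -> closure A `&` B = set0.
  move=> A B oB AB; apply/disjoints_subset.
  have : A `<=` ~` B by apply/disjoints_subset.
  by move/closure_subset; rewrite -((closure_id (~` B)).1 (open_closedC oB)).
split; first exact: cl.
by rewrite setIC; apply: cl => //; rewrite setIC.
Qed.

Lemma clopen_false (A : set T) : compact A -> open A -> A !=set0 -> False.
Proof.
move=> cA oA [a Aa].
have [b nAb] := not_full cA.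
have clA : closed A := compact_closed (@norm_hausdorff _ _) cA.
pose f := fun t : R => a + t *: (b - a).
have cf : continuous f.
  move=> t; apply: cvgD; first exact: cvg_cst.
  by apply: cvgZl; exact: cvg_id.
have cf' : {within (`[(0:R), 1]%classic), continuous f} by apply: continuous_subspaceT.
have cc := connected_continuous_connected (@segment_connected R 0 1) cf'.
have H : f @` (`[(0:R), 1]%classic) `<=` A `|` ~` A by move=> x _; exact: lem.
have i0 : (`[(0:R), 1]%classic) 0 by rewrite /= in_itv /= lexx ler01.
have i1 : (`[(0:R), 1]%classic) 1 by rewrite /= in_itv /= lexx ler01.
case: (connected_subset (sep_open oA (closed_openC clA) (setICr A)) H cc) => sub.
- apply: nAb; have := sub (f 1) (ex_intro2 _ _ 1 i1 erefl).
  by rewrite /f scale1r addrC subrK.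
- apply: (sub (f 0) (ex_intro2 _ _ 0 i0 erefl)).
  by rewrite /f scale0r addr0.
Qed.


Lemma bdP (A : set T) x : closed A -> boundary A x <-> A x /\ ~ A° x.
Proof.
move=> cA; rewrite /boundary /= -((closure_id A).1 cA); split; by case.
Qed.

Lemma bd_nonempty (A : set T) : compact A -> A !=set0 -> boundary A !=set0.
Proof.
move=> cA A0.
have clA : closed A := compact_closed (@norm_hausdorff _ _) cA.
case: (pselect (boundary A !=set0)) => // H; exfalso.
apply: (clopen_false cA) A0.
have -> : A = A°; last exact: open_interior.
apply/seteqP; split => x; last exact: interior_subset.
move=> Ax; case: (pselect (A° x)) => // nx; exfalso; apply: H; exists x.
exact/(bdP _ clA).
Qed.

Lemma dich (K L : set T) : closed K -> closed L -> connected (boundary K) ->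
  ~ (exists z, boundary K z /\ boundary L z) -> boundary K `<=` L° \/ boundary K `<=` ~` L.
Proof.
move=> cK cL conn H.
apply: (connected_subset (sep_open (@open_interior _ L) (closed_openC cL) _)) => //.
  by apply/seteqP; split => // x [/interior_subset Lx]; apply.
move=> x bKx; case: (pselect (L x)) => Lx; last by right.
case: (pselect (L° x)) => Lix; first by left.
by exfalso; apply: H; exists x; split => //; exact/(bdP _ cL).
Qed.

Lemma caseb (K L : set T) : compact K -> compact L -> L !=set0 ->
  boundary K `<=` L° -> boundary L `<=` ~` K -> K `<` L.
Proof.
move=> cK cL L0 bKL bLK.
have clK : closed K := compact_closed (@norm_hausdorff _ _) cK.
have clL : closed L := compact_closed (@norm_hausdorff _ _) cL.
split; last first.
  move=> LK; have [y /[dup] bLy /(bdP _ clL) [Ly _]] := bd_nonempty cL L0.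
  exact: (bLK y bLy (LK y Ly)).
move=> x Kx; case: (pselect (L x)) => // nLx; exfalso.
have E : K `&` ~` L° = K° `&` ~` L.
  apply/seteqP; split => y [Ky Hy].
    split.
      case: (pselect (K° y)) => // nKi; exfalso; apply: Hy; apply: bKL.
      exact/(bdP _ clK).
    move=> Ly; apply: (bLK y) Ky; apply/(bdP _ clL); split => //.
  by split; [exact: interior_subset | move=> /interior_subset].
apply: (@clopen_false (K `&` ~` L°)).
- exact: compact_closedI cK (open_closedC (@open_interior _ L)).
- by rewrite E; apply: openI; [exact: open_interior | exact: closed_openC].
- by exists x; split => // /interior_subset.
Qed.
End S.

Theorem lemma15 (R : realType) (n : nat) (hn : (0 < n)%N)
  (K L : set 'rV[R]_n) :
  K !=set0 -> L !=set0 -> compact K -> compact L ->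
  connected (boundary K) -> connected (boundary L) ->
  K `&` L !=set0 ->
  ~ (L `<` K) -> ~ (K `<` L) ->
  exists z, boundary K z /\ boundary L z.
Proof.
move=> K0 L0 cK cL connK connL KL nLK nKL.
case: (pselect (exists z, boundary K z /\ boundary L z)) => // H; exfalso.
have clK : closed K := compact_closed (@norm_hausdorff _ _) cK.
have clL : closed L := compact_closed (@norm_hausdorff _ _) cL.
have H' : ~ (exists z, boundary L z /\ boundary K z).
  by move=> [z [? ?]]; apply: H; exists z.
have bK := bdP _ clK; have bL := bdP _ clL.
case: (dich clK clL connK H) => hK; case: (dich clL clK connL H') => hL.
- apply: (@clopen_false _ _ hn (K `|` L)); first exact: compactU.
    have -> : K `|` L = K° `|` L°; last by apply: openU; exact: open_interior.
    apply/seteqP; split => x.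
      case=> Hx.
        case: (pselect (K° x)) => Kx; first by left.
        by right; apply: hK; exact/bK.
      case: (pselect (L° x)) => Lx; first by right.
      by left; apply: hL; exact/bL.
    by case=> /interior_subset; [left|right].
  by case: K0 => x Kx; exists x; left.
- by apply: nKL; apply: (caseb hn) => //.
- by apply: nLK; apply: (caseb hn) => //.
- apply: (@clopen_false _ _ hn (K `&` L)); first exact: compact_closedI.
    have -> : K `&` L = K° `&` L°; last by apply: openI; exact: open_interior.
    apply/seteqP; split => x; last by case=> /interior_subset ? /interior_subset.
    move=> [Kx Lx]; split.
      by case: (pselect (K° x)) => // nx; exfalso; apply: (hK x) => //; exact/bK.
    by case: (pselect (L° x)) => // nx; exfalso; apply: (hL x) => //; exact/bL.
  done.
Qed.
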